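(* Let $G$ be a finite simple graph such that the cut polytope $\mathrm{Cut}(G)$ is compressed, and let $\Sigma$ be a special simplex in $\mathrm{Cut}(G)$. If $G$ satisfies one of the conditions (a) there exists an edge of $G$ that is contained in no triangle of $G$, or (b) $G$ has an induced cycle of length $4$, then $\dim\Sigma=1$.
   Context: $G$ is a finite graph without loops or multiple edges on vertex set $[n]$ with edge set $\{e_1,\dots,e_m\}$. For $S\subset[n]$, $\delta_G(S)\in\{0,1\}^m$ has coordinate $1$ at edge $\{a,b\}$ iff $|S\cap\{a,b\}|=1$; the cut polytope $\mathrm{Cut}(G)\subset\mathbb{R}^m$ is the convex hull of all $\delta_G(S)$. An integral polytope is compressed if all of its reverse lexicographic (pulling) triangulations, using its lattice points, are unimodular. A $d$-simplex $\Sigma$ each of whose vertices is a vertex of a polytope $P$ is a special simplex in $P$ if each facet of $P$ contains exactly $d$ of the vertices of $\Sigma$. An induced cycle is a cycle without chords; a triangle is a cycle of length $3$. *)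

(* Defs.v *)
From HB Require Import structures.
From mathcomp Require Import all_boot all_order all_algebra.
Set Implicit Arguments. Unset Strict Implicit. Unset Printing Implicit Defensive.
Import Order.TTheory GRing.Theory Num.Theory.
Local Open Scope ring_scope.

Definition pt (d : nat) := 'rV[rat]_d.

Definition dotv d (c x : pt d) : rat := \sum_(i < d) c 0 i * x 0 i.

Definition integral_pt d (x : pt d) : Prop := forall i, x 0 i \is a Num.int.

Definition in_conv d (V : seq (pt d)) (x : pt d) : Prop :=
  exists l : 'I_(size V) -> rat,
    [/\ forall i, 0 <= l i, \sum_i l i = 1 & x = \sum_i l i *: V`_i].

(* affine rank of a finite point list: rank of the lifted points (1, v);
   the affine dimension of conv A is (arank A) - 1 *)
Definition arank d (A : seq (pt d)) : nat :=
  \rank (\matrix_(i < size A) (row_mx (1 : 'rV[rat]_1) A`_i)).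

Definition aff_indep d (A : seq (pt d)) : bool := arank A == size A.

Definition is_vertex d (V : seq (pt d)) (v : pt d) : Prop :=
  in_conv V v /\
  exists (c : pt d) (b : rat),
    [/\ forall x, in_conv V x -> dotv c x <= b,
        dotv c v = b &
        forall x, in_conv V x -> dotv c x = b -> x = v].

(* valid inequality c.x <= b for the polytope conv V, defining a facet:
   the face conv V ∩ {c.x = b} = conv [v in V | c.v = b] has dimension
   dim (conv V) - 1 *)
Definition facet_ineq d (V : seq (pt d)) (c : pt d) (b : rat) : Prop :=
  (forall x, in_conv V x -> dotv c x <= b) /\
  arank [seq v <- V | dotv c v == b] = (arank V).-1 /\ (0 < arank V)%N.

(* special simplex: list s of affinely independent vertices of conv V
   (the simplex conv s has dimension size s - 1) such that every facet of
   conv V contains exactly (size s - 1) of them *)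
Definition special_simplex d (V : seq (pt d)) (s : seq (pt d)) : Prop :=
  [/\ aff_indep s, s != [::],
      forall v, v \in s -> is_vertex V v &
      forall c b, facet_ineq V c b ->
        count (fun v => dotv c v == b) s = (size s).-1].

(* [pulling ord A sigma]: sigma (list of vertices) is a maximal simplex of the
   pulling triangulation of the point configuration A with respect to the
   order ord (earlier in ord = pulled first). *)
Definition first_pt d (ord A : seq (pt d)) : pt d :=
  head 0 [seq x <- ord | x \in A].

Inductive pulling d (ord : seq (pt d)) : seq (pt d) -> seq (pt d) -> Prop :=
| pull_base A : arank A = 1%N -> pulling ord A [:: first_pt ord A]
| pull_step A (c : pt d) (b : rat) sigma :
    (1 < arank A)%N ->
    (forall x, x \in A -> dotv c x <= b) ->
    arank [seq x <- A | dotv c x == b] = (arank A).-1 ->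
    dotv c (first_pt ord A) < b ->
    pulling ord [seq x <- A | dotv c x == b] sigma ->
    pulling ord A (first_pt ord A :: sigma).

Definition unimodular d (sigma : seq (pt d)) : Prop :=
  forall (x : pt d) (l : 'I_(size sigma) -> rat),
    integral_pt x -> \sum_i l i = 1 -> x = \sum_i l i *: sigma`_i ->
    forall i, l i \is a Num.int.

Definition compressed d (V : seq (pt d)) : Prop :=
  forall ord : seq (pt d),
    uniq ord -> (forall x, x \in ord <-> (integral_pt x /\ in_conv V x)) ->
    forall sigma, pulling ord ord sigma -> unimodular sigma.

Definition simple_graph n (E : rel 'I_n) : Prop :=
  symmetric E /\ irreflexive E.

Definition gedges n (E : rel 'I_n) : seq ('I_n * 'I_n) :=
  filter (fun p : 'I_n * 'I_n => ((p.1 : nat) < p.2)%N && E p.1 p.2) (enum [set: 'I_n * 'I_n]).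

Definition nedges n (E : rel 'I_n) : nat := size (gedges E).

Definition cutvec n (E : rel 'I_n) (X : {set 'I_n}) : pt (nedges E) :=
  \row_(j < nedges E)
    (((tnth (in_tuple (gedges E)) j).1 \in X)
       != ((tnth (in_tuple (gedges E)) j).2 \in X))%:R.

Definition cut_gens n (E : rel 'I_n) : seq (pt (nedges E)) :=
  [seq cutvec E X | X <- enum [set: {set 'I_n}]].

Definition has_triangle_free_edge n (E : rel 'I_n) : Prop :=
  exists a b, E a b /\ forall c, ~~ (E a c && E b c).

Definition has_induced_C4 n (E : rel 'I_n) : Prop :=
  exists a b c e : 'I_n,
    [/\ uniq [:: a; b; c; e],
        [&& E a b, E b c, E c e & E e a] &
        ~~ E a c && ~~ E b e].

(* Main.v *)
Require Import Defs.
From mathcomp Require Import all_boot all_order all_algebra ring lra zify.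
Set Implicit Arguments. Unset Strict Implicit. Unset Printing Implicit Defensive.
Import Order.TTheory GRing.Theory Num.Theory.
Local Open Scope ring_scope.
Lemma dotv_sumr d (c : pt d) (I : finType) (l : I -> rat) (F : I -> pt d) :
  dotv c (\sum_i l i *: F i) = \sum_i l i * dotv c (F i).
Proof.
rewrite /dotv.
under eq_bigr => j _ do rewrite summxE big_distrr /=.
rewrite exchange_big /=; apply: eq_bigr => i _; rewrite big_distrr /=.
by apply: eq_bigr => j _; rewrite mxE mulrCA.
Qed.

Lemma dotvDl d (c1 c2 x : pt d) : dotv (c1 + c2) x = dotv c1 x + dotv c2 x.
Proof. by rewrite /dotv -big_split; apply: eq_bigr => i _; rewrite mxE mulrDl. Qed.

Lemma dotvNl d (c x : pt d) : dotv (- c) x = - dotv c x.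
Proof. by rewrite /dotv -sumrN; apply: eq_bigr => i _; rewrite mxE mulNr. Qed.

Lemma dotv_delta d (j : 'I_d) (x : pt d) : dotv (delta_mx 0 j) x = x 0 j.
Proof.
rewrite /dotv (bigD1 j) //= big1 ?addr0; first by rewrite mxE !eqxx mul1r.
by move=> i /negbTE ij; rewrite mxE ij andbF mul0r.
Qed.

Lemma in_conv_nth d (V : seq (pt d)) (i : 'I_(size V)) : in_conv V V`_i.
Proof.
exists (fun k => (k == i)%:R); split.
- by move=> k; rewrite ler0n.
- by rewrite (bigD1 i) //= eqxx big1 ?addr0 // => k /negbTE ->.
- rewrite (bigD1 i) //= big1 ?addr0 ?eqxx ?scale1r // => k /negbTE ->.
  by rewrite scale0r.
Qed.

Lemma conv_le d (V : seq (pt d)) (c : pt d) (b : rat) x :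
  (forall v, v \in V -> dotv c v <= b) -> in_conv V x -> dotv c x <= b.
Proof.
move=> H [l [l0 l1 ->]]; rewrite dotv_sumr.
apply: le_trans (_ : \sum_i l i * b <= b).
  by apply: ler_sum => i _; rewrite ler_wpM2l // H // mem_nth.
by rewrite -big_distrl /= l1 mul1r.
Qed.

Lemma vertex_in d (V : seq (pt d)) v : is_vertex V v -> v \in V.
Proof.
move=> [[l [l0 l1 vE]] [c [b [Hle Hb Huniq]]]].
have Hi : forall i, l i * (b - dotv c V`_i) = 0.
  move=> i; apply: (@psumr_eq0P _ _ xpredT (fun i => l i * (b - dotv c V`_i))) => //.
    by move=> k _; rewrite mulr_ge0 // subr_ge0 (Hle _ (in_conv_nth k)).
  rewrite (eq_bigr (fun k => l k * b - l k * dotv c V`_k)); last first.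
    by move=> k _; rewrite mulrBr.
  by rewrite sumrB -big_distrl /= l1 mul1r -dotv_sumr -vE Hb subrr.
have [i li] : exists i, l i != 0.
  apply/existsP; apply: contraT; rewrite negb_exists => /forallP H0.
  by move: l1; rewrite big1 // => k _; apply/eqP; rewrite -[_ == _]negbK H0.
have : dotv c V`_i = b.
  by move: (Hi i) => /eqP; rewrite mulf_eq0 (negbTE li) subr_eq0 => /eqP <-.
move/(Huniq _ (in_conv_nth i)) => <-; exact: mem_nth.
Qed.

Definition lift d (A : seq (pt d)) : 'M[rat]_(size A, 1 + d) :=
  \matrix_(i < size A) (row_mx (1 : 'rV[rat]_1) A`_i).

Lemma rank_col_le (m1 m2 n : nat) (A : 'M[rat]_(m1, n)) (B : 'M[rat]_(m2, n)) :
  (\rank (col_mx A B) <= \rank A + \rank B)%N.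
Proof. by rewrite -addsmxE; exact: mxrank_adds_leqif. Qed.

Lemma lift_mul d (u0 : 'rV[rat]_1) (w v : pt d) :
  row_mx u0 w *m (row_mx (1 : 'rV[rat]_1) v)^T = (u0 0 0 + dotv w v)%:M.
Proof.
rewrite tr_row_mx mul_row_col trmx1 mulmx1; apply/rowP => i.
rewrite ord1 !mxE eqxx mulr1n; congr (_ + _).
by rewrite /dotv; apply: eq_bigr => j _; rewrite !mxE.
Qed.

Lemma mulmx_tr_entry n p (z : 'rV[rat]_n) (M : 'M[rat]_(p, n)) i :
  (z *m M^T) 0 i = (z *m (row i M)^T) 0 0.
Proof. by rewrite !mxE; apply: eq_bigr => j _; rewrite !mxE. Qed.

Lemma lift_mem d (A : seq (pt d)) v : v \in A ->
  (row_mx (1 : 'rV[rat]_1) v <= lift A)%MS.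
Proof.
move=> vA; have ia : (index v A < size A)%N by rewrite index_mem.
by apply: (eq_row_sub (Ordinal ia)); rewrite rowK /= nth_index.
Qed.

Lemma facet_from_dual d (V : seq (pt d)) (c : pt d) (b : rat) (x0 : pt d) :
  (forall v, v \in V -> dotv c v <= b) ->
  x0 \in V -> dotv c x0 != b ->
  (forall (u0 : rat) (w : pt d),
     (forall v, v \in V -> (dotv c v == b) || (v == x0) -> u0 + dotv w v = 0) ->
     u0 = 0 /\ w = 0) ->
  facet_ineq V c b.
Proof.
move=> Hle x0V x0b Hdual.
set F := [seq v <- V | dotv c v == b].
have FV : (lift F <= lift V)%MS.
  apply/row_subP => i; rewrite rowK; apply: lift_mem.
  by have := mem_nth 0 (ltn_ord i); rewrite mem_filter => /andP[].
have up : (\rank (lift F) <= d)%N.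
  set z : 'rV[rat]_(1 + d) := row_mx (- b)%:M c.
  have z0 : z != 0.
    rewrite row_mx_eq0; apply: contra x0b => /andP[/eqP b0 /eqP c0].
    have -> : b = 0 by move/rowP: b0 => /(_ 0); rewrite !mxE eqxx mulr1n => /eqP; rewrite oppr_eq0 => /eqP.
    by rewrite c0 /dotv big1 // => i _; rewrite mxE mul0r.
  have zk : (z <= kermx (lift F)^T)%MS.
    apply/sub_kermxP/rowP => i; rewrite mulmx_tr_entry rowK lift_mul mxE !mxE eqxx mulr1n.
    have := mem_nth 0 (ltn_ord i); rewrite mem_filter => /andP[/eqP -> _].
    by rewrite addNr.
  have := mxrankS zk; rewrite mxrank_ker mxrank_tr rank_rV z0.
  by rewrite subn_gt0 ltnS.
set A := col_mx (lift F) (row_mx (1 : 'rV[rat]_1) x0).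
have kA : kermx A^T = 0.
  apply/row_matrixP => i; rewrite row0.
  set r := row i (kermx A^T).
  have rk : r *m A^T = 0.
    by apply/sub_kermxP; apply: row_sub.
  rewrite -(hsubmxK r).
  have [] := Hdual (lsubmx r 0 0) (rsubmx r).
    move=> v vV /orP[vF|/eqP ->].
      have vF' : v \in F by rewrite mem_filter vF.
      have ia : (index v F < size F)%N by rewrite index_mem.
      move/rowP: rk => /(_ (lshift 1 (Ordinal ia))).
      rewrite mulmx_tr_entry rowKu rowK -{1}(hsubmxK r) lift_mul /= nth_index //.
      by rewrite !mxE eqxx mulr1n.
    move/rowP: rk => /(_ (rshift (size F) 0)).
    rewrite mulmx_tr_entry rowKd -{1}(hsubmxK r).
    have -> : row 0 (row_mx (1 : 'rV[rat]_1) x0) = row_mx 1 x0.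
      by apply/rowP => j; rewrite !mxE.
    by rewrite lift_mul !mxE eqxx mulr1n.
  move=> u00 ->.
  have -> : lsubmx r = 0 by apply/rowP => j; rewrite ord1 u00 mxE.
  by apply/eqP; rewrite row_mx_eq0 !eqxx.
have lo : (1 + d <= \rank A)%N.
  have := mxrank_ker A^T; rewrite kA mxrank0 mxrank_tr => /esym/eqP.
  by rewrite subn_eq0.
have lo2 : (1 + d <= \rank (lift F) + 1)%N.
  apply: leq_trans lo _; apply: leq_trans (rank_col_le _ _) _.
  by rewrite leq_add2l rank_leq_row.
have AV : (A <= lift V)%MS by rewrite col_mx_sub FV lift_mem.
have rV : \rank (lift V) = (1 + d)%N.
  apply/eqP; rewrite eqn_leq rank_leq_col /=.
  exact: leq_trans lo (mxrankS AV).
split; first by move=> x; apply: conv_le.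
rewrite /arank -/(lift V) -/(lift F) rV; split => //.
apply/eqP; rewrite eqn_leq up /=.
by rewrite -ltnS -(addn1 (\rank _)); exact: lo2.
Qed.

Definition ep1 n (E : rel 'I_n) (j : 'I_(nedges E)) : 'I_n := (tnth (in_tuple (gedges E)) j).1.
Definition ep2 n (E : rel 'I_n) (j : 'I_(nedges E)) : 'I_n := (tnth (in_tuple (gedges E)) j).2.
Definition cr n (E : rel 'I_n) (X : {set 'I_n}) (j : 'I_(nedges E)) : bool :=
  (ep1 j \in X) != (ep2 j \in X).
Definition endp n (E : rel 'I_n) (j : 'I_(nedges E)) (p q : 'I_n) : bool :=
  ((ep1 j == p) && (ep2 j == q)) || ((ep1 j == q) && (ep2 j == p)).

Lemma cutvecE n (E : rel 'I_n) X j : cutvec E X 0 j = (cr X j)%:R.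
Proof. by rewrite mxE. Qed.

Lemma ep_prop n (E : rel 'I_n) (j : 'I_(nedges E)) :
  ((ep1 j : nat) < ep2 j)%N && E (ep1 j) (ep2 j).
Proof.
have := mem_tnth j (in_tuple (gedges E)).
by rewrite /ep1 /ep2 /= mem_filter => /andP[].
Qed.

Lemma tnth_ged n (E : rel 'I_n) x0 (j : 'I_(nedges E)) :
  tnth (in_tuple (gedges E)) j = nth x0 (gedges E) j.
Proof. exact: tnth_nth. Qed.

Lemma ep_inj n (E : rel 'I_n) (g g' : 'I_(nedges E)) :
  ep1 g = ep1 g' -> ep2 g = ep2 g' -> g = g'.
Proof.
move=> h1 h2.
have : tnth (in_tuple (gedges E)) g = tnth (in_tuple (gedges E)) g'.
  have e1 : forall j, tnth (in_tuple (gedges E)) j = (ep1 j, ep2 j).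
    by move=> j; rewrite /ep1 /ep2; case: (tnth _ j).
  by rewrite e1 e1 h1 h2.
rewrite (tnth_ged (ep1 g, ep2 g) g) (tnth_ged (ep1 g, ep2 g) g') => /eqP.
rewrite nth_uniq; first by move/eqP/val_inj.
- exact: (ltn_ord g).
- exact: (ltn_ord g').
- by rewrite filter_uniq // enum_uniq.
Qed.

Lemma endp_inj n (E : rel 'I_n) (g g' : 'I_(nedges E)) p q :
  endp g p q -> endp g' p q -> g = g'.
Proof.
have := ep_prop g; have := ep_prop g'.
rewrite /endp => /andP[lt' _] /andP[lt _].
case/orP => /andP[/eqP h1 /eqP h2]; case/orP => /andP[/eqP h1' /eqP h2'];
  try (apply: ep_inj; congruence).
- by move: lt lt'; rewrite h1 h2 h1' h2' => a b; have := ltn_trans a b; rewrite ltnn.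
- by move: lt lt'; rewrite h1 h2 h1' h2' => a b; have := ltn_trans a b; rewrite ltnn.
Qed.

Lemma endp_sym n (E : rel 'I_n) (g : 'I_(nedges E)) p q : endp g p q = endp g q p.
Proof. by rewrite /endp orbC. Qed.

Lemma endp_edge n (E : rel 'I_n) (g : 'I_(nedges E)) p q :
  simple_graph E -> endp g p q -> E p q.
Proof.
move=> [sE _]; have /andP[_ Hg] := ep_prop g.
by rewrite /endp => /orP[] /andP[/eqP <- /eqP <-] //; rewrite sE.
Qed.

Lemma edge_index n (E : rel 'I_n) p q :
  simple_graph E -> E p q -> exists j : 'I_(nedges E), endp j p q.
Proof.
move=> [sE iE] Epq.
have : exists2 pr : 'I_n * 'I_n, pr \in gedges E & (pr == (p, q)) || (pr == (q, p)).
  have pq : p != q by apply: contraTneq Epq => ->; rewrite iE.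
  case: (ltngtP p q) => [lt|lt|/val_inj eq]; last by rewrite eq eqxx in pq.
  - by exists (p, q); rewrite ?eqxx // mem_filter /= lt Epq mem_enum inE.
  - by exists (q, p); rewrite ?eqxx ?orbT // mem_filter /= lt sE Epq mem_enum inE.
case=> pr prin hpr.
have ia : (index pr (gedges E) < nedges E)%N by rewrite index_mem.
exists (Ordinal ia); rewrite /endp /ep1 /ep2 (tnth_ged pr) nth_index //;
  try by case/orP: hpr => /eqP -> /=; rewrite !eqxx ?orbT.
Qed.

Lemma cr_endp n (E : rel 'I_n) (g : 'I_(nedges E)) p q X :
  endp g p q -> cr X g = ((p \in X) != (q \in X)).
Proof.
rewrite /cr /endp => /orP[] /andP[/eqP -> /eqP ->] //.
by case: (p \in X); case: (q \in X).
Qed.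

Definition sd n (A B : {set 'I_n}) : {set 'I_n} := (A :\: B) :|: (B :\: A).

Lemma in_sd n (A B : {set 'I_n}) x : (x \in sd A B) = (x \in A) (+) (x \in B).
Proof. by rewrite !inE; case: (x \in A); case: (x \in B). Qed.

Lemma cr_sd n (E : rel 'I_n) (A B : {set 'I_n}) (g : 'I_(nedges E)) :
  cr (sd A B) g = cr A g (+) cr B g.
Proof.
rewrite /cr !in_sd.
by case: (ep1 g \in A); case: (ep1 g \in B); case: (ep2 g \in A); case: (ep2 g \in B).
Qed.

Definition phi n (E : rel 'I_n) (u0 : rat) (w : pt (nedges E)) (X : {set 'I_n}) : rat :=
  u0 + dotv w (cutvec E X).

Lemma dotv_cut n (E : rel 'I_n) (w : pt (nedges E)) X :
  dotv w (cutvec E X) = \sum_g w 0 g * (cr X g)%:R.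
Proof. by apply: eq_bigr => g _; rewrite cutvecE. Qed.

Lemma bool4 (t y1 y2 : bool) :
  (t%:R + (t (+) (y1 (+) y2))%:R - (t (+) y1)%:R - (t (+) y2)%:R : rat) =
  if y1 && y2 then (if t then 2 else -2) else 0.
Proof. by case: t; case: y1; case: y2; vm_compute. Qed.

Lemma key4 n (E : rel 'I_n) (u0 : rat) (w : pt (nedges E)) T Y1 Y2 (g : 'I_(nedges E)) :
  (forall g', (cr Y1 g' && cr Y2 g') = (g' == g)) ->
  phi u0 w T + phi u0 w (sd T (sd Y1 Y2)) - phi u0 w (sd T Y1) - phi u0 w (sd T Y2)
  = w 0 g * (if cr T g then 2 else -2).
Proof.
move=> Hg.
have -> : phi u0 w T + phi u0 w (sd T (sd Y1 Y2)) - phi u0 w (sd T Y1) - phi u0 w (sd T Y2)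
  = \sum_g' w 0 g' * ((cr T g')%:R + (cr (sd T (sd Y1 Y2)) g')%:R
        - (cr (sd T Y1) g')%:R - (cr (sd T Y2) g')%:R).
  rewrite /phi !dotv_cut.
  have -> : forall (F1 F2 F3 F4 : 'I_(nedges E) -> rat),
      \sum_g' w 0 g' * (F1 g' + F2 g' - F3 g' - F4 g') =
      \sum_g' w 0 g' * F1 g' + \sum_g' w 0 g' * F2 g' - \sum_g' w 0 g' * F3 g'
      - \sum_g' w 0 g' * F4 g'.
    move=> F1 F2 F3 F4.
    rewrite (eq_bigr (fun i => w 0 i * F1 i + w 0 i * F2 i - w 0 i * F3 i - w 0 i * F4 i));
      last by move=> i _; ring.
    by rewrite !sumrB big_split.
  ring.
rewrite (bigD1 g) //= big1 ?addr0.
  by rewrite !cr_sd bool4 Hg eqxx.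
move=> g' /negbTE ng; rewrite !cr_sd bool4.
by rewrite Hg ng mulr0.
Qed.

Lemma key4_0 n (E : rel 'I_n) (u0 : rat) (w : pt (nedges E)) T Y1 Y2 (g : 'I_(nedges E)) :
  (forall g', (cr Y1 g' && cr Y2 g') = (g' == g)) ->
  phi u0 w T = 0 -> phi u0 w (sd T (sd Y1 Y2)) = 0 -> phi u0 w (sd T Y1) = 0 ->
  phi u0 w (sd T Y2) = 0 -> w 0 g = 0.
Proof.
move=> Hg h1 h2 h3 h4; have := key4 u0 w T Hg; rewrite h1 h2 h3 h4 => H.
have : w 0 g * (if cr T g then 2 else -2) == 0 by rewrite -H; apply/eqP; ring.
rewrite mulf_eq0 => /orP[/eqP //|].
by case: (cr T g).
Qed.

Lemma common_edge n (E : rel 'I_n) (g : 'I_(nedges E)) (w x : 'I_n) (Y : {set 'I_n}) :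
  simple_graph E ->
  w \notin Y -> endp g w x -> x \in Y -> (forall y, E w y -> y \in Y -> y = x) ->
  forall g', (cr [set w] g' && cr Y g') = (g' == g).
Proof.
move=> [sE iE] wY gwx xY Hu g'.
have Ewx : E w x by apply: (endp_edge (conj sE iE) gwx).
have xw : x != w by apply: contraTneq Ewx => ->; rewrite iE.
apply/andP/eqP => [[]|->]; last first.
  rewrite !(cr_endp _ gwx) !inE eqxx (negbTE xw) (negbTE wY) xY; done.
have /andP[_ Eg] := ep_prop g'.
rewrite /cr !inE; case: (eqVneq (ep1 g') w) => [e1|n1] /=.
  rewrite e1 in Eg *; rewrite (negbTE wY) /= => n2 y2.
  have y2' : ep2 g' \in Y by move: y2; case: (ep2 g' \in Y).
  have := Hu _ Eg y2' => e2.
  by apply: (endp_inj _ gwx); rewrite /endp e1 e2 !eqxx.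
move=> h; have /eqP e2 : ep2 g' == w by move: h; case: (_ == w).
rewrite e2 (negbTE wY) => y1'.
have y1 : ep1 g' \in Y by move: y1'; case: (ep1 g' \in Y).
rewrite e2 in Eg; have := Hu _ (etrans (sE _ _) Eg) y1 => e1.
by apply: (endp_inj _ gwx); rewrite /endp e1 e2 !eqxx orbT.
Qed.

Lemma dotv_supp d (w x : pt d) (S : seq 'I_d) :
  uniq S -> (forall g, g \notin S -> w 0 g = 0) ->
  dotv w x = \sum_(g <- S) w 0 g * x 0 g.
Proof.
move=> uS H; rewrite /dotv (bigID (fun g => g \in S)) /= [X in _ + X]big1 ?addr0.
  by rewrite big_uniq.
by move=> g /H ->; rewrite mul0r.
Qed.

Lemma cut_gensP n (E : rel 'I_n) v : v \in cut_gens E -> exists X, v = cutvec E X.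
Proof. by case/mapP => X _ ->; exists X. Qed.

Lemma cut_gens_mem n (E : rel 'I_n) X : cutvec E X \in cut_gens E.
Proof. by apply: map_f; rewrite mem_enum inE. Qed.

Lemma sdA n (A B C : {set 'I_n}) : sd A (sd B C) = sd (sd A B) C.
Proof. by apply/setP => x; rewrite !in_sd addbA. Qed.

Lemma vanish n (E : rel 'I_n) (u0 : rat) (w : pt (nedges E)) (P : {set 'I_n} -> bool)
   T Y1 Y2 (g : 'I_(nedges E)) :
  (forall X, P X = P T -> phi u0 w X = 0) ->
  (forall X, P (sd X Y1) = P X) -> (forall X, P (sd X Y2) = P X) ->
  (forall g', (cr Y1 g' && cr Y2 g') = (g' == g)) -> w 0 g = 0.
Proof.
move=> H h1 h2 Hg; apply: (key4_0 Hg); apply: H => //; by rewrite ?sdA ?h2 ?h1.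
Qed.

Lemma vanish_cr n (E : rel 'I_n) (u0 : rat) (w : pt (nedges E)) (S : seq 'I_(nedges E))
   T Y1 Y2 (g : 'I_(nedges E)) :
  (forall X, [seq cr X j | j <- S] = [seq cr T j | j <- S] -> phi u0 w X = 0) ->
  (forall j, j \in S -> cr Y1 j = false) -> (forall j, j \in S -> cr Y2 j = false) ->
  (forall g', (cr Y1 g' && cr Y2 g') = (g' == g)) -> w 0 g = 0.
Proof.
move=> H h1 h2; apply: (@vanish _ _ _ _ (fun X => [seq cr X j | j <- S] == [seq cr T j | j <- S]) T).
- by move=> X; rewrite eqxx => /eqP; apply: H.
- move=> X; have -> : [seq cr (sd X Y1) j | j <- S] = [seq cr X j | j <- S] => //.
  by apply/eq_in_map => j jS; rewrite cr_sd h1 // addbF.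
- move=> X; have -> : [seq cr (sd X Y2) j | j <- S] = [seq cr X j | j <- S] => //.
  by apply/eq_in_map => j jS; rewrite cr_sd h2 // addbF.
Qed.


Lemma phi_supp n (E : rel 'I_n) (u0 : rat) (w : pt (nedges E)) (S : seq 'I_(nedges E)) X :
  uniq S -> (forall g, g \notin S -> w 0 g = 0) ->
  phi u0 w X = u0 + \sum_(g <- S) w 0 g * (cr X g)%:R.
Proof.
move=> uS H; rewrite /phi (dotv_supp _ uS H); congr (_ + _).
by apply: eq_bigr => g _; rewrite cutvecE.
Qed.

Lemma notin2 n (p a b : 'I_n) : p \notin [set a; b] ->
  ((a \in [set p]) != (b \in [set p])) = false.
Proof. by rewrite !inE negb_or !(eq_sym p) => /andP[/negbTE -> /negbTE ->]. Qed.

Lemma caseA_dual n (E : rel 'I_n) (a b : 'I_n) (je : 'I_(nedges E)) (k : bool)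
    (u0 : rat) (w : pt (nedges E)) :
  simple_graph E -> (forall x, ~~ (E a x && E b x)) -> endp je a b ->
  (forall X, cr X je = k \/ X = (if k then set0 else [set a]) -> phi u0 w X = 0) ->
  u0 = 0 /\ w = 0.
Proof.
move=> sG Htf eje Hphi.
have [sE iE] := sG.
have Eab : E a b by apply: endp_edge eje.
have ab : a != b by apply: contraTneq Eab => ->; rewrite iE.
have crje : forall X, cr X je = ((a \in X) != (b \in X)) by move=> X; apply: cr_endp.
have cra : cr [set a] je by rewrite crje !inE eqxx (eq_sym b a) (negbTE ab).
have cr0 : cr set0 je = false by rewrite crje !inE.
have W1 : forall g, g != je -> w 0 g = 0.
  move=> g gne.
  have gpq : endp g (ep1 g) (ep2 g) by rewrite /endp !eqxx.
  have Epq := endp_edge sG gpq.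
  have pq : ep1 g != ep2 g by apply: contraTneq Epq => ->; rewrite iE.
  pose T := if k then [set a] else set0.
  have HT : forall X, [seq cr X j | j <- [:: je]] = [seq cr T j | j <- [:: je]] ->
      phi u0 w X = 0.
    have cT : cr T je = k by rewrite /T; case: (k).
    by move=> X [] e; apply: Hphi; left; rewrite e cT.
  case: (boolP (ep1 g \in [set a; b])) => pab; case: (boolP (ep2 g \in [set a; b])) => qab.
  - exfalso; move: gne; apply/negP/negPn/eqP.
    move: pab qab pq gpq; rewrite !inE.
    case/orP=> /eqP ->; case/orP=> /eqP -> //; rewrite ?eqxx // => _ gpq.
      exact: endp_inj gpq eje.
    by rewrite endp_sym in gpq; exact: endp_inj gpq eje.
  - apply: (@vanish_cr _ _ _ _ [:: je] T [set ep2 g] [set a; b] g HT).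
    + by move=> j; rewrite inE => /eqP ->; rewrite crje notin2.
    + by move=> j; rewrite inE => /eqP ->; rewrite crje !inE !eqxx orbT.
    + apply: (@common_edge _ _ g (ep2 g) (ep1 g) [set a; b]) => //; first by rewrite endp_sym.
      move=> y Ey; move: pab; rewrite !inE => /orP[] /eqP pe /orP[] /eqP ye //; rewrite ?pe ?ye //.
      * by exfalso; move: (Htf (ep2 g)); rewrite -pe Epq sE -ye Ey.
      * by exfalso; move: (Htf (ep2 g)); rewrite -pe Epq sE -ye Ey.
  - apply: (@vanish_cr _ _ _ _ [:: je] T [set ep1 g] [set a; b] g HT).
    + by move=> j; rewrite inE => /eqP ->; rewrite crje notin2.
    + by move=> j; rewrite inE => /eqP ->; rewrite crje !inE !eqxx orbT.
    + apply: (@common_edge _ _ g (ep1 g) (ep2 g) [set a; b]) => //.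
      move=> y Ey; move: qab; rewrite !inE => /orP[] /eqP pe /orP[] /eqP ye //; rewrite ?pe ?ye //.
      * by exfalso; move: (Htf (ep1 g)); rewrite -pe -ye (sE (ep2 g)) (sE y) Epq Ey.
      * by exfalso; move: (Htf (ep1 g)); rewrite -pe -ye (sE (ep2 g)) (sE y) Epq Ey.
  - apply: (@vanish_cr _ _ _ _ [:: je] T [set ep1 g] [set ep2 g] g HT).
    + by move=> j; rewrite inE => /eqP ->; rewrite crje notin2.
    + by move=> j; rewrite inE => /eqP ->; rewrite crje notin2.
    + apply: (@common_edge _ _ g (ep1 g) (ep2 g) [set ep2 g]) => //; first by rewrite inE.
      * by rewrite inE.
      * by move=> y _; rewrite inE => /eqP.
have Hs : forall X, phi u0 w X = u0 + w 0 je * (cr X je)%:R.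
  move=> X; rewrite (@phi_supp _ _ _ _ [:: je]) //; first by rewrite big_cons big_nil addr0.
  by move=> g; rewrite inE; apply: W1.
have h0 : phi u0 w set0 = 0 by apply: Hphi; case: k; [right|left].
have ha : phi u0 w [set a] = 0 by apply: Hphi; case: k; [left|right].
rewrite !Hs cr0 cra mulr0 addr0 in h0 ha.
rewrite h0 add0r mulr1 in ha.
split => //; apply/rowP => g; rewrite mxE.
by case: (eqVneq g je) => [->|/W1] //.
Qed.

Lemma caseA_facet n (E : rel 'I_n) (a b : 'I_n) (je : 'I_(nedges E)) (k : bool) :
  simple_graph E -> (forall x, ~~ (E a x && E b x)) -> endp je a b ->
  facet_ineq (cut_gens E) (if k then delta_mx 0 je else - delta_mx 0 je)
    (if k then 1 else 0).
Proof.
move=> sG Htf eje.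
have [sE iE] := sG.
have Eab : E a b by apply: endp_edge eje.
have ab : a != b by apply: contraTneq Eab => ->; rewrite iE.
have cra : cr [set a] je by rewrite (cr_endp _ eje) !inE eqxx (eq_sym b a) (negbTE ab).
have cr0 : cr set0 je = false by rewrite (cr_endp _ eje) !inE.
set c := (if k then _ else _).
have dA : forall X, dotv c (cutvec E X) = if k then (cr X je)%:R else - (cr X je)%:R.
  by move=> X; rewrite /c; case: (k); rewrite ?dotvNl dotv_delta cutvecE.
apply: (@facet_from_dual _ _ _ _ (cutvec E (if k then set0 else [set a]))).
- move=> v /cut_gensP [X ->]; rewrite dA.
  by case: (k); case: (cr X je); rewrite //= ?oppr0 // lerN10.
- exact: cut_gens_mem.
- by rewrite dA; case: (k); rewrite ?cr0 ?cra //= oppr_eq0 oner_eq0.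
- move=> u0 w H; apply: (@caseA_dual _ E a b je k) => // X hX.
  apply: H; first exact: cut_gens_mem.
  case: hX => [e|->]; last by rewrite eqxx orbT.
  by rewrite dA e; case: (k).
Qed.


Definition Fk (k x1 x2 x3 x4 : bool) : bool :=
  if k then ((- ((x1%:R : rat) - x2%:R - x3%:R - x4%:R)) == 2%:R)
  else (((x1%:R : rat) - x2%:R - x3%:R - x4%:R) == 0).

Lemma endp_same n (E : rel 'I_n) (j : 'I_(nedges E)) p q r s :
  endp j p q -> endp j r s -> ((p == r) && (q == s)) || ((p == s) && (q == r)).
Proof.
rewrite /endp => /orP[] /andP[/eqP <- /eqP <-] /orP[] /andP[/eqP -> /eqP ->];
  by rewrite !eqxx ?orbT.
Qed.

Lemma cr_single n (E : rel 'I_n) (j : 'I_(nedges E)) p q x :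
  endp j p q -> cr [set x] j = ((x == p) != (x == q)).
Proof. by move=> h; rewrite (cr_endp _ h) !inE !(eq_sym x). Qed.

Lemma caseB_dual n (E : rel 'I_n) (a b c e : 'I_n) (j1 j2 j3 j4 : 'I_(nedges E)) (k : bool)
    (u0 : rat) (w : pt (nedges E)) :
  simple_graph E -> uniq [:: a; b; c; e] -> ~~ E a c -> ~~ E b e ->
  endp j1 a b -> endp j2 b c -> endp j3 c e -> endp j4 e a ->
  (forall X, Fk k (cr X j1) (cr X j2) (cr X j3) (cr X j4) -> phi u0 w X = 0) ->
  phi u0 w (if k then set0 else [set c]) = 0 ->
  u0 = 0 /\ w = 0.
Proof.
move=> sG U nac nbe e1 e2 e3 e4 HF H0.
have [sE iE] := sG.
move: U; rewrite /= !inE !negb_or => /andP[/and3P[ab ac ae] /andP[/andP[bc be] /andP[ce _]]].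
have ba' : (b == a) = false by rewrite eq_sym; apply/negbTE.
have ab' : (a == b) = false by apply/negbTE.
have ca' : (c == a) = false by rewrite eq_sym; apply/negbTE.
have ac' : (a == c) = false by apply/negbTE.
have ea' : (e == a) = false by rewrite eq_sym; apply/negbTE.
have ae' : (a == e) = false by apply/negbTE.
have cb' : (c == b) = false by rewrite eq_sym; apply/negbTE.
have bc' : (b == c) = false by apply/negbTE.
have eb' : (e == b) = false by rewrite eq_sym; apply/negbTE.
have be' : (b == e) = false by apply/negbTE.
have ec' : (e == c) = false by rewrite eq_sym; apply/negbTE.
have ce' : (c == e) = false by apply/negbTE.
have saj1 : cr [set a] j1 = true by rewrite (cr_single _ e1) ?eqxx ?(ab', ac', ae', bc', be', ce', ba', ca', ea', cb', eb', ec').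
have saj2 : cr [set a] j2 = false by rewrite (cr_single _ e2) ?eqxx ?(ab', ac', ae', bc', be', ce', ba', ca', ea', cb', eb', ec').
have saj3 : cr [set a] j3 = false by rewrite (cr_single _ e3) ?eqxx ?(ab', ac', ae', bc', be', ce', ba', ca', ea', cb', eb', ec').
have saj4 : cr [set a] j4 = true by rewrite (cr_single _ e4) ?eqxx ?(ab', ac', ae', bc', be', ce', ba', ca', ea', cb', eb', ec').
have sbj1 : cr [set b] j1 = true by rewrite (cr_single _ e1) ?eqxx ?(ab', ac', ae', bc', be', ce', ba', ca', ea', cb', eb', ec').
have sbj2 : cr [set b] j2 = true by rewrite (cr_single _ e2) ?eqxx ?(ab', ac', ae', bc', be', ce', ba', ca', ea', cb', eb', ec').
have sbj3 : cr [set b] j3 = false by rewrite (cr_single _ e3) ?eqxx ?(ab', ac', ae', bc', be', ce', ba', ca', ea', cb', eb', ec').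
have sbj4 : cr [set b] j4 = false by rewrite (cr_single _ e4) ?eqxx ?(ab', ac', ae', bc', be', ce', ba', ca', ea', cb', eb', ec').
have scj1 : cr [set c] j1 = false by rewrite (cr_single _ e1) ?eqxx ?(ab', ac', ae', bc', be', ce', ba', ca', ea', cb', eb', ec').
have scj2 : cr [set c] j2 = true by rewrite (cr_single _ e2) ?eqxx ?(ab', ac', ae', bc', be', ce', ba', ca', ea', cb', eb', ec').
have scj3 : cr [set c] j3 = true by rewrite (cr_single _ e3) ?eqxx ?(ab', ac', ae', bc', be', ce', ba', ca', ea', cb', eb', ec').
have scj4 : cr [set c] j4 = false by rewrite (cr_single _ e4) ?eqxx ?(ab', ac', ae', bc', be', ce', ba', ca', ea', cb', eb', ec').
have sej1 : cr [set e] j1 = false by rewrite (cr_single _ e1) ?eqxx ?(ab', ac', ae', bc', be', ce', ba', ca', ea', cb', eb', ec').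
have sej2 : cr [set e] j2 = false by rewrite (cr_single _ e2) ?eqxx ?(ab', ac', ae', bc', be', ce', ba', ca', ea', cb', eb', ec').
have sej3 : cr [set e] j3 = true by rewrite (cr_single _ e3) ?eqxx ?(ab', ac', ae', bc', be', ce', ba', ca', ea', cb', eb', ec').
have sej4 : cr [set e] j4 = true by rewrite (cr_single _ e4) ?eqxx ?(ab', ac', ae', bc', be', ce', ba', ca', ea', cb', eb', ec').
pose C := [set a; b; c; e].
have c0 : forall j : 'I_(nedges E), cr set0 j = false by move=> j; rewrite /cr !in_set0.
have cout : forall (x : 'I_n) (j : 'I_(nedges E)) p q, x \notin C -> endp j p q -> p \in C -> q \in C ->
    cr [set x] j = false.
  move=> x j p q xC hj pC qC; rewrite (cr_single _ hj).
  have xp : (x == p) = false by apply: contraNF xC => /eqP ->.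
  have xq : (x == q) = false by apply: contraNF xC => /eqP ->.
  by rewrite xp xq.
have aC : a \in C by rewrite !inE eqxx.
have bC : b \in C by rewrite !inE eqxx ?orbT.
have cC : c \in C by rewrite !inE eqxx ?orbT.
have eC : e \in C by rewrite !inE eqxx ?orbT.
have outer : forall (g : 'I_(nedges E)) (v x : 'I_n), endp g v x -> v \notin C -> x \in C -> w 0 g = 0.
  move=> g v x gvx vC xC.
  have comm := @common_edge _ _ g v x [set x] sG.
  have vx : v \notin [set x] by apply: contraNN vC; rewrite inE => /eqP ->.
  have uq : forall y, E v y -> y \in [set x] -> y = x by move=> y _; rewrite inE => /eqP.
  have {}comm := comm vx gvx (set11 x) uq.
  have v1 := cout v _ _ _ vC e1 aC bC.
  have v2 := cout v _ _ _ vC e2 bC cC.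
  have v3 := cout v _ _ _ vC e3 cC eC.
  have v4 := cout v _ _ _ vC e4 eC aC.
  move: xC comm; rewrite /C !inE => /orP[/orP[/orP[]|]|] /eqP -> comm.
  - case: (k) HF => HF.
    + apply: (@key4_0 _ _ u0 w ([set c]) _ _ _ comm); apply: HF;
        by rewrite ?cr_sd ?c0 ?v1 ?v2 ?v3 ?v4 ?(saj1, saj2, saj3, saj4, sbj1, sbj2, sbj3, sbj4, scj1, scj2, scj3, scj4, sej1, sej2, sej3, sej4).
    + apply: (@key4_0 _ _ u0 w (set0) _ _ _ comm); apply: HF;
        by rewrite ?cr_sd ?c0 ?v1 ?v2 ?v3 ?v4 ?(saj1, saj2, saj3, saj4, sbj1, sbj2, sbj3, sbj4, scj1, scj2, scj3, scj4, sej1, sej2, sej3, sej4).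
  - case: (k) HF => HF.
    + apply: (@key4_0 _ _ u0 w ([set e]) _ _ _ comm); apply: HF;
        by rewrite ?cr_sd ?c0 ?v1 ?v2 ?v3 ?v4 ?(saj1, saj2, saj3, saj4, sbj1, sbj2, sbj3, sbj4, scj1, scj2, scj3, scj4, sej1, sej2, sej3, sej4).
    + apply: (@key4_0 _ _ u0 w (set0) _ _ _ comm); apply: HF;
        by rewrite ?cr_sd ?c0 ?v1 ?v2 ?v3 ?v4 ?(saj1, saj2, saj3, saj4, sbj1, sbj2, sbj3, sbj4, scj1, scj2, scj3, scj4, sej1, sej2, sej3, sej4).
  - case: (k) HF => HF.
    + apply: (@key4_0 _ _ u0 w (sd [set c] [set e]) _ _ _ comm); apply: HF;
        by rewrite ?cr_sd ?c0 ?v1 ?v2 ?v3 ?v4 ?(saj1, saj2, saj3, saj4, sbj1, sbj2, sbj3, sbj4, scj1, scj2, scj3, scj4, sej1, sej2, sej3, sej4).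
    + apply: (@key4_0 _ _ u0 w ([set b]) _ _ _ comm); apply: HF;
        by rewrite ?cr_sd ?c0 ?v1 ?v2 ?v3 ?v4 ?(saj1, saj2, saj3, saj4, sbj1, sbj2, sbj3, sbj4, scj1, scj2, scj3, scj4, sej1, sej2, sej3, sej4).
  - case: (k) HF => HF.
    + apply: (@key4_0 _ _ u0 w ([set c]) _ _ _ comm); apply: HF;
        by rewrite ?cr_sd ?c0 ?v1 ?v2 ?v3 ?v4 ?(saj1, saj2, saj3, saj4, sbj1, sbj2, sbj3, sbj4, scj1, scj2, scj3, scj4, sej1, sej2, sej3, sej4).
    + apply: (@key4_0 _ _ u0 w (sd [set b] [set c]) _ _ _ comm); apply: HF;
        by rewrite ?cr_sd ?c0 ?v1 ?v2 ?v3 ?v4 ?(saj1, saj2, saj3, saj4, sbj1, sbj2, sbj3, sbj4, scj1, scj2, scj3, scj4, sej1, sej2, sej3, sej4).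
have inner : forall (g : 'I_(nedges E)), ep1 g \notin C -> ep2 g \notin C -> w 0 g = 0.
  move=> g pC qC.
  have gpq : endp g (ep1 g) (ep2 g) by rewrite /endp !eqxx.
  have Epq := endp_edge sG gpq.
  have pq : ep1 g != ep2 g by apply: contraTneq Epq => ->; rewrite iE.
  pose T := if k then [set c] else set0.
  apply: (@vanish_cr _ _ _ _ [:: j1; j2; j3; j4] T [set ep1 g] [set ep2 g] g).
  - move=> X [] h1 h2 h3 h4; apply: HF; rewrite h1 h2 h3 h4 /T.
    by case: (k); rewrite ?c0 ?(saj1, saj2, saj3, saj4, sbj1, sbj2, sbj3, sbj4, scj1, scj2, scj3, scj4, sej1, sej2, sej3, sej4).
  - move=> j; rewrite !inE => /or4P[]/eqP ->.
    + exact: (cout _ _ _ _ pC e1 aC bC).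
    + exact: (cout _ _ _ _ pC e2 bC cC).
    + exact: (cout _ _ _ _ pC e3 cC eC).
    + exact: (cout _ _ _ _ pC e4 eC aC).
  - move=> j; rewrite !inE => /or4P[]/eqP ->.
    + exact: (cout _ _ _ _ qC e1 aC bC).
    + exact: (cout _ _ _ _ qC e2 bC cC).
    + exact: (cout _ _ _ _ qC e3 cC eC).
    + exact: (cout _ _ _ _ qC e4 eC aC).
  - apply: (@common_edge _ _ g (ep1 g) (ep2 g) [set ep2 g]) => //; first by rewrite inE.
    + by rewrite inE.
    + by move=> y _; rewrite inE => /eqP.
have S4 : forall g, g \notin [:: j1; j2; j3; j4] -> w 0 g = 0.
  move=> g gS.
  have gpq : endp g (ep1 g) (ep2 g) by rewrite /endp !eqxx.
  have none : forall p q, endp g p q -> p \in C -> q \in C -> False.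
    move=> p q h; have Epq := endp_edge sG h; move: gS.
    rewrite /C !inE => gS /orP[/orP[/orP[]|]|] /eqP pe /orP[/orP[/orP[]|]|] /eqP qe; subst p q;
    first [ by rewrite iE in Epq
          | by rewrite (negbTE nac) in Epq | by rewrite sE (negbTE nac) in Epq
          | by rewrite (negbTE nbe) in Epq | by rewrite sE (negbTE nbe) in Epq
          | by rewrite (endp_inj h e1) eqxx in gS | by rewrite (endp_inj h e2) eqxx ?orbT in gS
          | by rewrite (endp_inj h e3) eqxx ?orbT in gS | by rewrite (endp_inj h e4) eqxx ?orbT in gS
          | (rewrite endp_sym in h; first [ by rewrite (endp_inj h e1) eqxx in gS | by rewrite (endp_inj h e2) eqxx ?orbT in gS
          | by rewrite (endp_inj h e3) eqxx ?orbT in gS | by rewrite (endp_inj h e4) eqxx ?orbT in gS ]) ].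
  case: (boolP (ep1 g \in C)) => pC; case: (boolP (ep2 g \in C)) => qC.
  - by case: (none _ _ gpq pC qC).
  - by apply: (outer g (ep2 g) (ep1 g)) => //; rewrite endp_sym.
  - exact: (outer g (ep1 g) (ep2 g)).
  - exact: inner.
have uS : uniq [:: j1; j2; j3; j4].
  have d12 : (j1 == j2) = false.
    apply/negbTE/eqP => h; have := endp_same e1 ltac:(rewrite h; exact: e2).
    by rewrite ?eqxx ?(ab', ac', ae', bc', be', ce', ba', ca', ea', cb', eb', ec').
  have d13 : (j1 == j3) = false.
    apply/negbTE/eqP => h; have := endp_same e1 ltac:(rewrite h; exact: e3).
    by rewrite ?eqxx ?(ab', ac', ae', bc', be', ce', ba', ca', ea', cb', eb', ec').
  have d14 : (j1 == j4) = false.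
    apply/negbTE/eqP => h; have := endp_same e1 ltac:(rewrite h; exact: e4).
    by rewrite ?eqxx ?(ab', ac', ae', bc', be', ce', ba', ca', ea', cb', eb', ec').
  have d23 : (j2 == j3) = false.
    apply/negbTE/eqP => h; have := endp_same e2 ltac:(rewrite h; exact: e3).
    by rewrite ?eqxx ?(ab', ac', ae', bc', be', ce', ba', ca', ea', cb', eb', ec').
  have d24 : (j2 == j4) = false.
    apply/negbTE/eqP => h; have := endp_same e2 ltac:(rewrite h; exact: e4).
    by rewrite ?eqxx ?(ab', ac', ae', bc', be', ce', ba', ca', ea', cb', eb', ec').
  have d34 : (j3 == j4) = false.
    apply/negbTE/eqP => h; have := endp_same e3 ltac:(rewrite h; exact: e4).
    by rewrite ?eqxx ?(ab', ac', ae', bc', be', ce', ba', ca', ea', cb', eb', ec').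
  by rewrite /= !inE !negb_or d12 d13 d14 d23 d24 d34.
have Hs : forall X, phi u0 w X = u0 + (w 0 j1 * (cr X j1)%:R + (w 0 j2 * (cr X j2)%:R +
    (w 0 j3 * (cr X j3)%:R + (w 0 j4 * (cr X j4)%:R + 0)))).
  by move=> X; rewrite (phi_supp _ _ uS S4) !big_cons big_nil.
have [u00 w1 w2 w3 w4] : [/\ u0 = 0, w 0 j1 = 0, w 0 j2 = 0, w 0 j3 = 0 & w 0 j4 = 0].
  case: (k) HF H0 => HF H0.
  - rewrite Hs ?c0 ?(saj1, saj2, saj3, saj4, sbj1, sbj2, sbj3, sbj4, scj1, scj2, scj3, scj4, sej1, sej2, sej3, sej4) in H0.
    have q0 := HF ([set c]) ltac:(by rewrite ?cr_sd ?c0 ?(saj1, saj2, saj3, saj4, sbj1, sbj2, sbj3, sbj4, scj1, scj2, scj3, scj4, sej1, sej2, sej3, sej4)).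
    rewrite Hs ?cr_sd ?c0 ?(saj1, saj2, saj3, saj4, sbj1, sbj2, sbj3, sbj4, scj1, scj2, scj3, scj4, sej1, sej2, sej3, sej4) in q0.
    have q1 := HF (sd [set c] [set e]) ltac:(by rewrite ?cr_sd ?c0 ?(saj1, saj2, saj3, saj4, sbj1, sbj2, sbj3, sbj4, scj1, scj2, scj3, scj4, sej1, sej2, sej3, sej4)).
    rewrite Hs ?cr_sd ?c0 ?(saj1, saj2, saj3, saj4, sbj1, sbj2, sbj3, sbj4, scj1, scj2, scj3, scj4, sej1, sej2, sej3, sej4) in q1.
    have q2 := HF ([set e]) ltac:(by rewrite ?cr_sd ?c0 ?(saj1, saj2, saj3, saj4, sbj1, sbj2, sbj3, sbj4, scj1, scj2, scj3, scj4, sej1, sej2, sej3, sej4)).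
    rewrite Hs ?cr_sd ?c0 ?(saj1, saj2, saj3, saj4, sbj1, sbj2, sbj3, sbj4, scj1, scj2, scj3, scj4, sej1, sej2, sej3, sej4) in q2.
    have q3 := HF (sd [set a] [set c]) ltac:(by rewrite ?cr_sd ?c0 ?(saj1, saj2, saj3, saj4, sbj1, sbj2, sbj3, sbj4, scj1, scj2, scj3, scj4, sej1, sej2, sej3, sej4)).
    rewrite Hs ?cr_sd ?c0 ?(saj1, saj2, saj3, saj4, sbj1, sbj2, sbj3, sbj4, scj1, scj2, scj3, scj4, sej1, sej2, sej3, sej4) in q3.
    move: H0 q0 q1 q2 q3; rewrite /= ?mulr1 ?mulr0 ?addr0 ?add0r => *.
    split; lra.
  - rewrite Hs ?c0 ?(saj1, saj2, saj3, saj4, sbj1, sbj2, sbj3, sbj4, scj1, scj2, scj3, scj4, sej1, sej2, sej3, sej4) in H0.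
    have q0 := HF ([set b]) ltac:(by rewrite ?cr_sd ?c0 ?(saj1, saj2, saj3, saj4, sbj1, sbj2, sbj3, sbj4, scj1, scj2, scj3, scj4, sej1, sej2, sej3, sej4)).
    rewrite Hs ?cr_sd ?c0 ?(saj1, saj2, saj3, saj4, sbj1, sbj2, sbj3, sbj4, scj1, scj2, scj3, scj4, sej1, sej2, sej3, sej4) in q0.
    have q1 := HF (sd [set b] [set c]) ltac:(by rewrite ?cr_sd ?c0 ?(saj1, saj2, saj3, saj4, sbj1, sbj2, sbj3, sbj4, scj1, scj2, scj3, scj4, sej1, sej2, sej3, sej4)).
    rewrite Hs ?cr_sd ?c0 ?(saj1, saj2, saj3, saj4, sbj1, sbj2, sbj3, sbj4, scj1, scj2, scj3, scj4, sej1, sej2, sej3, sej4) in q1.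
    have q2 := HF ([set a]) ltac:(by rewrite ?cr_sd ?c0 ?(saj1, saj2, saj3, saj4, sbj1, sbj2, sbj3, sbj4, scj1, scj2, scj3, scj4, sej1, sej2, sej3, sej4)).
    rewrite Hs ?cr_sd ?c0 ?(saj1, saj2, saj3, saj4, sbj1, sbj2, sbj3, sbj4, scj1, scj2, scj3, scj4, sej1, sej2, sej3, sej4) in q2.
    have q3 := HF (set0) ltac:(by rewrite ?cr_sd ?c0 ?(saj1, saj2, saj3, saj4, sbj1, sbj2, sbj3, sbj4, scj1, scj2, scj3, scj4, sej1, sej2, sej3, sej4)).
    rewrite Hs ?cr_sd ?c0 ?(saj1, saj2, saj3, saj4, sbj1, sbj2, sbj3, sbj4, scj1, scj2, scj3, scj4, sej1, sej2, sej3, sej4) in q3.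
    move: H0 q0 q1 q2 q3; rewrite /= ?mulr1 ?mulr0 ?addr0 ?add0r => *.
    split; lra.
split => //; apply/rowP => g; rewrite mxE.
case: (boolP (g \in [:: j1; j2; j3; j4])); last exact: S4.
by rewrite !inE => /or4P[]/eqP ->.
Qed.


Lemma parity4 n (E : rel 'I_n) (a b c e : 'I_n) (j1 j2 j3 j4 : 'I_(nedges E)) X :
  endp j1 a b -> endp j2 b c -> endp j3 c e -> endp j4 e a ->
  cr X j1 (+) cr X j2 (+) cr X j3 (+) cr X j4 = false.
Proof.
move=> e1 e2 e3 e4; rewrite (cr_endp _ e1) (cr_endp _ e2) (cr_endp _ e3) (cr_endp _ e4).
by case: (a \in X); case: (b \in X); case: (c \in X); case: (e \in X).
Qed.

Definition cB n (E : rel 'I_n) (j1 j2 j3 j4 : 'I_(nedges E)) (k : bool) : pt (nedges E) :=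
  let c0 := delta_mx 0 j1 - delta_mx 0 j2 - delta_mx 0 j3 - delta_mx 0 j4 in
  if k then - c0 else c0.

Lemma dotv_cB n (E : rel 'I_n) (j1 j2 j3 j4 : 'I_(nedges E)) k X :
  (dotv (cB j1 j2 j3 j4 k) (cutvec E X) == (if k then 2%:R else 0))
  = Fk k (cr X j1) (cr X j2) (cr X j3) (cr X j4).
Proof.
rewrite /cB /Fk; case: k; rewrite ?dotvNl !dotvDl !dotvNl !dotv_delta !cutvecE //.
Qed.

Lemma valid16 (k x1 x2 x3 x4 : bool) : x1 (+) x2 (+) x3 (+) x4 = false ->
  (if k then - ((x1%:R : rat) - x2%:R - x3%:R - x4%:R) else (x1%:R - x2%:R - x3%:R - x4%:R))
    <= (if k then 2%:R else 0).
Proof. by case: k; case: x1; case: x2; case: x3; case: x4 => /= h; first [discriminate h | lra]. Qed.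

Lemma caseB_facet n (E : rel 'I_n) (a b c e : 'I_n) (j1 j2 j3 j4 : 'I_(nedges E)) (k : bool) :
  simple_graph E -> uniq [:: a; b; c; e] -> ~~ E a c -> ~~ E b e ->
  endp j1 a b -> endp j2 b c -> endp j3 c e -> endp j4 e a ->
  facet_ineq (cut_gens E) (cB j1 j2 j3 j4 k) (if k then 2%:R else 0).
Proof.
move=> sG U nac nbe e1 e2 e3 e4.
have U' := U.
move: U'; rewrite /= !inE !negb_or => /andP[/and3P[ab ac ae] /andP[/andP[bc be] /andP[ce _]]].
have dform : forall X, dotv (cB j1 j2 j3 j4 k) (cutvec E X) =
   if k then - ((cr X j1)%:R - (cr X j2)%:R - (cr X j3)%:R - (cr X j4)%:R)
   else ((cr X j1)%:R - (cr X j2)%:R - (cr X j3)%:R - (cr X j4)%:R).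
  by move=> X; rewrite /cB; case: (k); rewrite ?dotvNl !dotvDl !dotvNl !dotv_delta !cutvecE.
have pc : [/\ cr [set c] j1 = false, cr [set c] j2, cr [set c] j3 & cr [set c] j4 = false].
  rewrite (cr_single _ e1) (cr_single _ e2) (cr_single _ e3) (cr_single _ e4) !eqxx.
  by rewrite !(eq_sym c) (negbTE ac) (negbTE bc) (eq_sym e) (negbTE ce).
have p0 : forall j : 'I_(nedges E), cr set0 j = false by move=> j; rewrite /cr !in_set0.
apply: (@facet_from_dual _ _ _ _ (cutvec E (if k then set0 else [set c]))).
- move=> v /cut_gensP [X ->]; rewrite dform; apply: valid16; exact: parity4 X e1 e2 e3 e4.
- exact: cut_gens_mem.
- rewrite dotv_cB; case: (k); [by rewrite !p0 | by case: pc => -> -> -> ->].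
- move=> u0 w H; apply: (@caseB_dual _ E a b c e j1 j2 j3 j4 k) => //.
  + move=> X hX; apply: H; first exact: cut_gens_mem.
    by rewrite dotv_cB hX.
  + by apply: H; [exact: cut_gens_mem | rewrite eqxx orbT].
Qed.

Lemma count_two d (s : seq (pt d)) (P1 P2 : pred (pt d)) :
  (forall v, v \in s -> P1 v (+) P2 v) ->
  count P1 s = (size s).-1 -> count P2 s = (size s).-1 -> s != [::] ->
  (size s).-1 = 1%N.
Proof.
move=> H c1 c2 sn.
have := count_predUI P1 P2 s.
rewrite (@eq_in_count _ (predU P1 P2) predT); last by move=> v /H /=; case: (P1 v); case: (P2 v).
rewrite (@eq_in_count _ (predI P1 P2) pred0); last by move=> v /H /=; case: (P1 v); case: (P2 v).
rewrite count_predT count_pred0 c1 c2 addn0.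
clear H c1 c2; have : (0 < size s)%N by case: s sn.
move: (size s) => m; lia.
Qed.

Lemma Fk_xor (x1 x2 x3 x4 : bool) : x1 (+) x2 (+) x3 (+) x4 = false ->
  Fk false x1 x2 x3 x4 (+) Fk true x1 x2 x3 x4.
Proof. by case: x1; case: x2; case: x3; case: x4 => // _; vm_compute. Qed.

Theorem lemma3p2 (n : nat) (E : rel 'I_n) (s : seq (pt (nedges E))) :
  simple_graph E ->
  compressed (cut_gens E) ->
  special_simplex (cut_gens E) s ->
  has_triangle_free_edge E \/ has_induced_C4 E ->
  (size s).-1 = 1%N.
Proof.
move=> sG _ [_ sn hv hf] [[a [b [Eab Htf]]] | [a [b [c [e [U /and4P[Eab Ebc Ece Eea] /andP[nac nbe]]]]]]].
- have [je eje] := edge_index sG Eab.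
  apply: (@count_two _ s (fun v => dotv (- delta_mx 0 je) v == 0)
                         (fun v => dotv (delta_mx 0 je) v == 1)) => //.
  + move=> v /hv /vertex_in /cut_gensP [X ->]; rewrite dotvNl dotv_delta cutvecE.
    by case: (cr X je); vm_compute.
  + exact: (hf _ _ (caseA_facet false sG Htf eje)).
  + exact: (hf _ _ (caseA_facet true sG Htf eje)).
- have [j1 e1] := edge_index sG Eab.
  have [j2 e2] := edge_index sG Ebc.
  have [j3 e3] := edge_index sG Ece.
  have [j4 e4] := edge_index sG Eea.
  apply: (@count_two _ s (fun v => dotv (cB j1 j2 j3 j4 false) v == (if false then 2%:R else 0))
                         (fun v => dotv (cB j1 j2 j3 j4 true) v == (if true then 2%:R else 0))) => //.
  + move=> v /hv /vertex_in /cut_gensP [X ->]; rewrite !dotv_cB.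
    exact: (Fk_xor (parity4 X e1 e2 e3 e4)).
  + exact: (hf _ _ (caseB_facet false sG U nac nbe e1 e2 e3 e4)).
  + exact: (hf _ _ (caseB_facet true sG U nac nbe e1 e2 e3 e4)).
Qed.
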